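(* Let $J_1,\dots,J_7$ be pairwise anticommuting orthogonal complex structures on $\mathfrak a=\mathbb R^8$, $\theta\in(0,\pi/2)$, $J'=J_7\cos\theta+J_6J_7\sin\theta$, and $V=\mathrm{Span}(J_1,\dots,J_6,J')$ with the inner product $\|J\|^2=-\frac18\mathrm{Tr}(J^2)$. Then for every $N\in O(\mathfrak a)$ with $NVN^{-1}\subset V$ (so that $K\mapsto N^{-1}KN$ is orthogonal on $V$) there exist $\varepsilon_7\in\{\pm1\}$ with $N^{-1}J_6N=J_6$, $N^{-1}J_7N=\varepsilon_7J_7$, $N^{-1}J'N=\varepsilon_7J'$. In particular there is no such $N$ with $N^{-1}J_6N=-J_6$, and for every inner product on $V$ whose restriction to $\mathrm{Span}(J_1,\dots,J_5)$ is standard and with $J_6,J'\perp J_i$ ($i\le5$), the pair $(V,\langle\cdot,\cdot\rangle)$ is not a WS-pair.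
   Context: Orthogonal complex structures on $\mathbb R^8$ are orthogonal matrices $J$ with $J^2=-I_8$. An inner product on $V\subset\mathfrak{so}(8)$ is standard if it is a positive multiple of $(J,K)\mapsto-\mathrm{Tr}(JK)$. For a Euclidean space $\mathfrak a$, a subspace $V\subset\mathfrak{so}(\mathfrak a)$ with inner product $\langle\cdot,\cdot\rangle$ defines the metric 2-step nilpotent Lie algebra $\mathfrak n=V\oplus\mathfrak a$ (orthogonal sum, $V$ central, $\langle J,[X,Y]\rangle=\langle JX,Y\rangle$); it is a WS-pair if the corresponding simply connected nilpotent Lie group with left-invariant metric is weakly symmetric. Standing fact: this holds iff for every $J\in V$, $X\in\mathfrak a$ there is $N\in\mathcal N(V)=\{N\in O(\mathfrak a): NVN^{-1}\subset V$, $K\mapsto NKN^{-1}$ orthogonal on $(V,\langle\cdot,\cdot\rangle)\}$ with $NX=-X$, $NJ=-JN$. *)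

(* Defs.v *)
From HB Require Import structures.
From mathcomp Require Import all_boot all_order all_algebra.
From mathcomp Require Import all_classical all_reals all_analysis.
Set Implicit Arguments. Unset Strict Implicit. Unset Printing Implicit Defensive.
Import Order.TTheory GRing.Theory Num.Theory.
Local Open Scope ring_scope.

Section Defs.
Variables (R : realType) (n : nat).

Definition orthogonal_mx (N : 'M[R]_n) : Prop := N *m N^T = 1%:M.

Definition ocs (J : 'M[R]_n) : Prop := orthogonal_mx J /\ J *m J = - 1%:M.

Definition inner_product_on (V : {vspace 'M[R]_n})
  (ip : 'M[R]_n -> 'M[R]_n -> R) : Prop :=
  [/\ (forall K L, K \in V -> L \in V -> ip K L = ip L K),
      (forall (a : R) K L M, K \in V -> L \in V -> M \in V ->
          ip (a *: K + L) M = a * ip K M + ip L M)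
    & (forall K, K \in V -> K != 0 -> 0 < ip K K)].

Definition standard_on (W : {vspace 'M[R]_n})
  (ip : 'M[R]_n -> 'M[R]_n -> R) : Prop :=
  exists2 c : R, 0 < c &
    forall K L, K \in W -> L \in W -> ip K L = c * (- \tr (K *m L)).

Definition in_NV (V : {vspace 'M[R]_n}) (ip : 'M[R]_n -> 'M[R]_n -> R)
  (N : 'M[R]_n) : Prop :=
  [/\ orthogonal_mx N,
      (forall K, K \in V -> N *m K *m invmx N \in V)
    & (forall K L, K \in V -> L \in V ->
         ip (N *m K *m invmx N) (N *m L *m invmx N) = ip K L)].

(* WS-pair, via the standing characterization of weak symmetry *)
Definition WS_pair (V : {vspace 'M[R]_n}) (ip : 'M[R]_n -> 'M[R]_n -> R) : Prop :=
  forall (J : 'M[R]_n) (X : 'cV[R]_n), J \in V ->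
    exists N : 'M[R]_n, [/\ in_NV V ip N, N *m X = - X & N *m J = - (J *m N)].

End Defs.

(* Main.v *)
Require Import Defs.
From HB Require Import structures.
From mathcomp Require Import all_boot all_order all_algebra.
From mathcomp Require Import all_classical all_reals all_analysis.
From mathcomp Require Import zify ring lra.
Import Order.TTheory GRing.Theory Num.Theory.
Local Open Scope ring_scope.
Import Order.TTheory GRing.Theory Num.Theory.

Lemma ord7 (a : 'I_7) : (a < 5)%N \/ a = 5%N :> nat \/ a = 6%N :> nat.
Proof. have := ltn_ord a; lia. Qed.
Definition good (k l : 'I_7) :=
  [|| k == l, ((k < 6) && (l < 6))%N, (k == 5 :> nat)&&(l == 6 :> nat) | (k == 6 :> nat)&&(l == 5 :> nat)].
Definition o6 : 'I_7 := Ordinal (isT : (6 < 7)%N).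
Definition o5 : 'I_7 := Ordinal (isT : (5 < 7)%N).

Lemma sum_onlyV (V : zmodType) (f : 'I_7 -> V) x : (forall a, a != x -> f a = 0) -> \sum_a f a = f x.
Proof. by move=> H; rewrite (bigD1 x) //= big1 ?addr0 // => a /H. Qed.

Section Comb.

Variable R : realFieldType.

Lemma ne5 (a : 'I_7) : a != o5 -> (a < 5)%N \/ a = o6.
Proof.
rewrite -val_eqE /= => H; case: (ord7 a) => [|[/eqP|]]; first by left.
- by rewrite (negbTE H).
- by move=> Ha; right; apply: val_inj.
Qed.

Lemma ne6 (a : 'I_7) : a != o6 -> (a < 5)%N \/ a = o5.
Proof.
rewrite -val_eqE /= => H; case: (ord7 a) => [|[|/eqP]]; first by left.
- by move=> Ha; right; apply: val_inj.
- by rewrite (negbTE H).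
Qed.

Lemma lt5ne (a : 'I_7) : (a < 5)%N -> a != o5 /\ a != o6.
Proof. by move=> H; split; rewrite -val_eqE /=; lia. Qed.

Lemma sum_only (f : 'I_7 -> R) x : (forall a, a != x -> f a = 0) -> \sum_a f a = f x.
Proof. by move=> H; rewrite (bigD1 x) //= big1 ?addr0 // => a /H. Qed.

Lemma good_refl k : good k k.
Proof. by rewrite /good eqxx. Qed.

Lemma good_lt6 (k l : 'I_7) : (k < 6)%N -> (l < 6)%N -> good k l.
Proof. by move=> Hk Hl; rewrite /good Hk Hl orbT. Qed.

Lemma good5 l : good o5 l.
Proof. by case: l => [[|[|[|[|[|[|[|l]]]]]]] Hl]. Qed.

Lemma half0 (x y : R) : x * y + y * x = 0 -> y != 0 -> x = 0.
Proof.
rewrite [y * x]mulrC -mulr2n -mulrnAl => /eqP; rewrite mulf_eq0 mulrn_eq0 /=.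
by case/orP => [/eqP -> |/eqP ->] //; rewrite eqxx.
Qed.

Lemma prod0 (x y : R) : x * y = 0 -> x != 0 -> y = 0.
Proof. by move/eqP; rewrite mulf_eq0 => /orP[/eqP ->|/eqP] //; rewrite eqxx. Qed.


Variable Q : 'I_7 -> 'I_7 -> R.
Hypothesis HO : forall k l, \sum_a Q k a * Q l a = (k == l)%:R.
Hypothesis HA : forall k l (j : 'I_7), (j < 5)%N -> good k l ->
  Q k j * Q l o6 + Q k o6 * Q l j = 0.

Lemma HC a b : \sum_k Q k a * Q k b = (a == b)%:R.
Proof.
pose M := \matrix_(k, a) Q k a.
have HM : M *m M^T = 1%:M.
  apply/matrixP => k l; rewrite !mxE -HO; apply: eq_bigr => x _.
  by rewrite !mxE.
have := mulmx1C HM => /matrixP /(_ a b); rewrite !mxE => <-.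
by apply: eq_bigr => k _; rewrite !mxE.
Qed.

Lemma col0 a : (forall k, Q k a = 0) -> False.
Proof.
move=> H; have := HC a a; rewrite eqxx big1 => [|k _]; last by rewrite H mulr0.
by move/eqP; rewrite eq_sym oner_eq0.
Qed.

Lemma row0 k : (forall a, Q k a = 0) -> False.
Proof.
move=> H; have := HO k k; rewrite eqxx big1 => [|a _]; last by rewrite H mulr0.
by move/eqP; rewrite eq_sym oner_eq0.
Qed.

Definition o0 : 'I_7 := Ordinal (isT : (0 < 7)%N).

Lemma step1a : Q o5 o6 = 0.
Proof.
apply/eqP/negP => /negP h.
have H5 : forall j : 'I_7, (j < 5)%N -> Q o5 j = 0.
  by move=> j Hj; apply: (@half0 (Q o5 j) (Q o5 o6) _ h); apply: HA => //; apply: good_refl.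
apply: (@col0 o0) => l.
have [->|Hl] := eqVneq l o5; first exact: H5.
have := HA o5 l o0 isT (good5 l); rewrite H5 // mul0r add0r.
by move/prod0; apply.
Qed.

Lemma step1b (j : 'I_7) : (j < 5)%N -> Q o5 j = 0.
Proof.
move=> Hj; apply/eqP/negP => /negP h.
apply: (@col0 o6) => l.
have [->|Hl] := eqVneq l o5; first exact: step1a.
have := HA o5 l j Hj (good5 l); rewrite step1a mul0r addr0.
by move/prod0; apply.
Qed.

Lemma row5 a : a != o5 -> Q o5 a = 0.
Proof. by case/ne5 => [/step1b|->] //; exact: step1a. Qed.

Lemma step2 : Q o5 o5 * Q o5 o5 = 1.
Proof.
have := HO o5 o5; rewrite eqxx (@sum_only _ o5) // => a Ha.
by rewrite row5 // mul0r.
Qed.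

Lemma Q55_neq0 : Q o5 o5 != 0.
Proof. by apply/negP => /eqP H; move: step2; rewrite H mul0r => /eqP; rewrite eq_sym oner_eq0. Qed.

Lemma step3 k : k != o5 -> Q k o5 = 0.
Proof.
move=> Hk; have := HO k o5; rewrite (negbTE Hk) (@sum_only _ o5) => [|a Ha].
  by rewrite mulrC => /prod0; apply; exact: Q55_neq0.
by rewrite row5 // mulr0.
Qed.

Lemma step4 (k : 'I_7) : (k < 5)%N -> Q k o6 = 0.
Proof.
move=> Hk; apply/eqP/negP => /negP h.
have Hkj : forall j : 'I_7, (j < 5)%N -> Q k j = 0.
  by move=> j Hj; apply: (@half0 (Q k j) (Q k o6) _ h); apply: HA => //; apply: good_refl.
pose m : 'I_7 := if k == o0 then Ordinal (isT : (1 < 7)%N) else o0.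
have Hm : (m < 5)%N by rewrite /m; case: ifP.
have Hmk : k != m by rewrite /m; have [->|Hk0] := eqVneq k o0; rewrite ?eqxx // (negbTE Hk0).
have Hg : good k m by apply: good_lt6; lia.
have Hmj : forall j : 'I_7, (j < 5)%N -> Q m j = 0.
  move=> j Hj; have := HA k m j Hj Hg; rewrite Hkj // mul0r add0r.
  by move/prod0; apply.
have Hm6 : Q m o6 = 0.
  have := HO k m; rewrite (negbTE Hmk) (@sum_only _ o6) => [|a Ha].
    by move/prod0; apply.
  case/ne6: Ha => [/Hkj -> |->]; first by rewrite mul0r.
  by rewrite step3 ?mul0r //; case: (@lt5ne k Hk).
apply: (@row0 m) => a.
case: (ord7 a) => [Ha|[Ha|Ha]]; first exact: Hmj.
- have -> : a = o5 by apply: val_inj.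
  by apply: step3; case: (@lt5ne m Hm).
- by have -> : a = o6 by apply: val_inj.
Qed.

Lemma step5 : Q o6 o6 * Q o6 o6 = 1.
Proof.
have := HC o6 o6; rewrite eqxx (@sum_only _ o6) // => k Hk.
by case/ne6: Hk => [/step4 ->|->]; rewrite ?mul0r // step1a mul0r.
Qed.

Lemma Q66_neq0 : Q o6 o6 != 0.
Proof. by apply/negP => /eqP H; move: step5; rewrite H mul0r => /eqP; rewrite eq_sym oner_eq0. Qed.

Lemma row6 a : a != o6 -> Q o6 a = 0.
Proof.
case/ne6 => [Ha|->]; last exact: step3.
by apply: (@half0 (Q o6 a) (Q o6 o6) _ Q66_neq0); apply: HA => //; apply: good_refl.
Qed.

End Comb.

Section Core.
Variable R : realFieldType.
Variable J : nat -> 'M[R]_8.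
Variables c s : R.
Hypothesis sqJ : forall i, (1 <= i <= 7)%N -> J i *m J i = - 1%:M.
Hypothesis acJ : forall i j, (1 <= i <= 7)%N -> (1 <= j <= 7)%N -> i != j ->
      J i *m J j = - (J j *m J i).
Hypothesis cs1 : c ^+ 2 + s ^+ 2 = 1.

Definition Y := J 6 *m J 7.
Definition J' := c *: J 7 + s *: Y.
Definition antic (A B : 'M[R]_8) := A *m B + B *m A.

Lemma anticC A B : antic A B = antic B A.
Proof. by rewrite /antic addrC. Qed.

Lemma acJ0 i j : (1 <= i <= 7)%N -> (1 <= j <= 7)%N -> i != j -> antic (J i) (J j) = 0.
Proof. by move=> Hi Hj Hij; rewrite /antic acJ // addNr. Qed.

Lemma Ysq : Y *m Y = - 1%:M.
Proof.
rewrite /Y -!mulmxA (mulmxA (J 7)) (acJ 7 6) //.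
by rewrite mulNmx mulmxN -mulmxA sqJ // mulmxA sqJ // mulNmx mul1mx opprK.
Qed.

Lemma YJ i : (1 <= i <= 5)%N -> J i *m Y = Y *m J i.
Proof.
move=> Hi.
rewrite /Y !mulmxA (acJ i 6) ?mulNmx; try lia.
by rewrite -!mulmxA (acJ i 7) ?mulmxN ?opprK //; lia.
Qed.

Lemma acJ7Y : antic (J 7) Y = 0.
Proof.
by rewrite /antic /Y mulmxA (acJ 7 6) // mulNmx addNr.
Qed.

Lemma acJ6Y : antic (J 6) Y = 0.
Proof.
rewrite /antic /Y mulmxA sqJ // -mulmxA (acJ 7 6) // mulmxN mulmxA sqJ //.
by rewrite ?mulmxN !mulNmx !mul1mx ?opprK addNr.
Qed.

Lemma anticDr A B C : antic A (B + C) = antic A B + antic A C.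
Proof. by rewrite /antic mulmxDl mulmxDr addrACA. Qed.
Lemma anticZr A a B : antic A (a *: B) = a *: antic A B.
Proof. by rewrite /antic -scalemxAl -scalemxAr scalerDr. Qed.

Lemma add4 (V : zmodType) (p q r t : V) : p + q + (r + t) = q + r + (p + t).
Proof. by rewrite [p + q]addrC addrACA. Qed.

Lemma J'sq : J' *m J' = - 1%:M.
Proof.
rewrite /J' mulmxDl !mulmxDr -!scalemxAl -!scalemxAr !scalerA sqJ // Ysq.
rewrite add4 (mulrC s c) -scalerDr.
have -> : J 7 *m Y + Y *m J 7 = antic (J 7) Y by [].
rewrite acJ7Y scaler0 add0r !scalerN -opprD -scalerDl.
by rewrite -!expr2 cs1 scale1r.
Qed.

Lemma acJ6J' : antic (J 6) J' = 0.
Proof. by rewrite /J' anticDr !anticZr acJ0 // acJ6Y !scaler0 addr0. Qed.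

Lemma acJiJ' i : (1 <= i <= 5)%N -> antic (J i) J' = (2 * s) *: (J i *m Y).
Proof.
move=> Hi; have /andP[H1 H5] := Hi.
have Hi7 : (1 <= i <= 7)%N by lia.
rewrite /J' anticDr !anticZr acJ0 //; last by lia.
by rewrite scaler0 add0r /antic -YJ // (mulrC 2) -scalerA scaler_nat mulr2n.
Qed.


Definition Xs := [seq J i | i <- iota 1 6] ++ [:: J'].
Definition E (a : 'I_7) := Xs`_a.
Definition F (a : 'I_7) := J a.+1 *m Y.

Lemma E_lt6 (a : 'I_7) : (a < 6)%N -> E a = J a.+1.
Proof. by case: a => [[|[|[|[|[|[|[|a]]]]]]] Ha]. Qed.

Lemma E_6 (a : 'I_7) : a = 6%N :> nat -> E a = J'.
Proof. by case: a => [[|[|[|[|[|[|[|a]]]]]]] Ha]. Qed.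



Lemma Esq a : E a *m E a = - 1%:M.
Proof.
have [Ha|Ha] := ltnP a 6; first by rewrite E_lt6 // sqJ //; lia.
by rewrite E_6 ?J'sq //; have := ltn_ord a; lia.
Qed.



Lemma antic_good k l : good k l -> antic (E k) (E l) = (-2 * (k == l)%:R) *: 1%:M.
Proof.
have [<-|Hkl] := eqVneq k l.
  by move=> _; rewrite /antic Esq /= mulr1 scaleNr scaler_nat -opprD mulr2n.
rewrite mulr0 scale0r /good (negbTE Hkl) /=.
case/or3P.
- case/andP=> Hk Hl; rewrite !E_lt6 // acJ0 //; try lia.
- case/andP=> /eqP Hk /eqP Hl; rewrite (@E_6 l Hl) (@E_lt6 k) ?Hk //.
  by rewrite acJ6J'.
- case/andP=> /eqP Hk /eqP Hl; rewrite (@E_6 _ Hk) (@E_lt6 l) ?Hl //.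
  by rewrite anticC acJ6J'.
Qed.

Lemma antic_bad (j k : 'I_7) : (j < 5)%N -> k = 6%N :> nat -> antic (E j) (E k) = (2 * s) *: F j.
Proof.
move=> Hj Hk; rewrite (@E_6 _ Hk) E_lt6 ?acJiJ' //; lia.
Qed.



Lemma mxtraceN (A : 'M[R]_8) : \tr (- A) = - \tr A.
Proof. exact: raddfN. Qed.

Lemma tr_anti0 (A B : 'M[R]_8) : A *m B = - (B *m A) -> B *m B = - 1%:M -> \tr A = 0.
Proof.
move=> HAB HB.
have H : \tr (A *m B *m B) = - \tr (A *m B *m B).
  have HBA : B *m A = - (A *m B) by rewrite HAB opprK.
  by rewrite {1}mxtrace_mulC mulmxA HBA mulNmx mxtraceN.
move: H; rewrite -mulmxA HB mulmxN mulmx1 mxtraceN.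
move=> H; lra.
Qed.

Lemma tr1 : \tr (1%:M : 'M[R]_8) = 8.
Proof. by rewrite mxtrace1. Qed.

Lemma trJJ i j : (1 <= i <= 7)%N -> (1 <= j <= 7)%N -> i != j -> \tr (J i *m J j) = 0.
Proof.
move=> Hi Hj Hij; apply: (@tr_anti0 _ (J i)); last exact: sqJ.
by rewrite -mulmxA (acJ j i) ?mulmxN // eq_sym.
Qed.

Lemma trF (j : 'I_7) : (j < 5)%N -> \tr (F j) = 0.
Proof.
move=> Hj; pose k := if j == 0%N :> nat then 2%N else 1%N.
have Hk : (1 <= k <= 5)%N by rewrite /k; case: ifP.
have Hkj : k != j.+1 by rewrite /k; case: ifP => /eqP; lia.
apply: (@tr_anti0 _ (J k)); last by apply: sqJ; lia.
rewrite /F -mulmxA -YJ // !mulmxA (acJ j.+1 k) ?mulNmx //; try lia.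
Qed.

Lemma trFF (i j : 'I_7) : (i < 5)%N -> (j < 5)%N -> \tr (F i *m F j) = 8 * (i == j)%:R.
Proof.
move=> Hi Hj.
have -> : F i *m F j = - (J i.+1 *m J j.+1).
  have gen : forall A B Z : 'M[R]_8, B *m Z = Z *m B -> Z *m Z = - 1%:M ->
     (A *m Z) *m (B *m Z) = - (A *m B).
    move=> A B Z HBZ HZ.
    by rewrite -!mulmxA (mulmxA Z) -HBZ -mulmxA HZ !mulmxN mulmx1.
  by rewrite /F gen ?Ysq // YJ //; lia.
rewrite mxtraceN.
have [<-|Hij] := eqVneq i j; first by rewrite sqJ ?mxtraceN ?opprK ?tr1 ?mulr1 //; lia.
rewrite trJJ ?oppr0 ?mulr0 //; try lia.
Qed.


Lemma good_bad (k l j : 'I_7) : (j < 5)%N -> good k l ->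
  ((k == j :> nat) && (l == 6%N :> nat)) || ((k == 6%N :> nat) && (l == j :> nat)) = false.
Proof.
rewrite /good => Hj Hg; apply/negP => H; move: Hg H.
have := ltn_ord k; have := ltn_ord l.
case: (eqVneq k l) => [->|Hkl] /=; first lia.
move/negP: Hkl; rewrite -val_eqE /=; lia.
Qed.


Lemma classify (k l : 'I_7) :
  good k l \/ ((k < 5)%N /\ l = 6%N :> nat) \/ (k = 6%N :> nat /\ (l < 5)%N).
Proof.
rewrite /good; have := ltn_ord k; have := ltn_ord l.
case: (eqVneq k l) => [->|Hkl] /=; first by left.
move/negP: Hkl; rewrite -val_eqE /= => Hkl Hl Hk.
have [H|H] := boolP [|| ((k < 6) && (l < 6))%N, (k == 5 :> nat) && (l == 6 :> nat) | (k == 6 :> nat) && (l == 5 :> nat)]; first by left.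
right; move: H; lia.
Qed.

Lemma tr_antic k l : \tr (antic (E k) (E l)) = -16 * (k == l)%:R.
Proof.
case: (classify k l) => [Hg|[[Hk Hl]|[Hk Hl]]].
- rewrite antic_good // mxtraceZ tr1.
  by case: (k == l); rewrite /= ?mulr1 ?mulr0 ?mul0r //; lra.
- have -> : (k == l) = false by apply/negP; rewrite -val_eqE /=; lia.
  by rewrite antic_bad // mxtraceZ trF // mulr0 mulr0.
- have -> : (k == l) = false by apply/negP; rewrite -val_eqE /=; lia.
  by rewrite anticC antic_bad // mxtraceZ trF // mulr0 mulr0.
Qed.

Lemma tr_anticF k l (j : 'I_7) : (j < 5)%N ->
  \tr (antic (E k) (E l) *m F j) =
  16 * s * (((k == j :> nat) && (l == 6%N :> nat)) || ((k == 6%N :> nat) && (l == j :> nat)))%:R.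
Proof.
move=> Hj.
case: (classify k l) => [Hg|[[Hk Hl]|[Hk Hl]]].
- by rewrite good_bad // antic_good // -scalemxAl mul1mx mxtraceZ trF // !mulr0.
- rewrite antic_bad // -scalemxAl mxtraceZ trFF // Hl eqxx andbT.
  have -> : (k == 6%N :> nat) = false by apply/negP; lia.
  rewrite orbF (_ : (k == j :> nat) = (k == j)) //.
  case: (k == j) => /=; rewrite ?mulr1 ?mulr0 //; lra.
- rewrite anticC antic_bad // -scalemxAl mxtraceZ trFF // Hk eqxx /=.
  have -> : (l == 6%N :> nat) = false by apply/negP; lia.
  rewrite andbF /= (_ : (l == j :> nat) = (j == l)) 1?eq_sym //.
  case: (j == l) => /=; rewrite ?mulr1 ?mulr0 //; lra.
Qed.


Lemma sum_delta (g : 'I_7 -> R) (y : 'I_7) : \sum_b g b * (b == y)%:R = g y.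
Proof.
rewrite (bigD1 y) //= eqxx mulr1 big1 ?addr0 // => b /negbTE ->.
by rewrite mulr0.
Qed.

Lemma sum_delta2 (f : 'I_7 -> 'I_7 -> R) (x y : 'I_7) :
  \sum_a \sum_b f a b * ((a == x)%:R * (b == y)%:R) = f x y.
Proof.
rewrite -(sum_delta (fun a => f a y) x); apply: eq_bigr => a _.
rewrite -(sum_delta (fun b => f a b * (a == x)%:R) y).
by apply: eq_bigr => b _; rewrite mulrA mulrAC.
Qed.




Lemma sum_ind (f : 'I_7 -> 'I_7 -> R) (j : 'I_7) : (j < 5)%N ->
  \sum_a \sum_b f a b * (((a == j :> nat) && (b == 6%N :> nat)) || ((a == 6%N :> nat) && (b == j :> nat)))%:R
  = f j o6 + f o6 j.
Proof.
move=> Hj.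
rewrite -(sum_delta2 f j o6) -(sum_delta2 f o6 j) -big_split /=.
apply: eq_bigr => a _; rewrite -big_split /=; apply: eq_bigr => b _.
rewrite -mulrDr; congr (_ * _).
rewrite (_ : (a == j :> nat) = (a == j)) // (_ : (b == 6%N :> nat) = (b == o6)) //.
rewrite (_ : (a == 6%N :> nat) = (a == o6)) // (_ : (b == j :> nat) = (b == j)) //.
have Hjo : (j == o6) = false by apply/negP; rewrite -val_eqE /=; lia.
have Hoj : (o6 == j) = false by rewrite eq_sym.
case: (eqVneq a j) => [->|_]; case: (eqVneq b o6) => [->|_];
 case: (eqVneq a o6) => [Ha|_]; case: (eqVneq b j) => [Hb|_] //=;
 rewrite ?Hjo ?Hoj /= ?andbT ?andbF ?mulr1 ?mul1r ?mulr0 ?mul0r ?addr0 ?add0r //.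
Qed.

Lemma tr_sum n (I : finType) (F : I -> 'M[R]_n) : \tr (\sum_i F i) = \sum_i \tr (F i).
Proof. exact: raddf_sum. Qed.

Lemma bilin n (E : 'I_n -> 'M[R]_8) (x y : 'I_n -> R) (T : 'M[R]_8) :
  let K := \sum_a x a *: E a in let L := \sum_b y b *: E b in
  \tr ((K *m L + L *m K) *m T) =
  \sum_a \sum_b x a * y b * \tr ((E a *m E b + E b *m E a) *m T).
Proof.
move=> K L.
have HKL : K *m L + L *m K = \sum_a \sum_b (x a * y b) *: (E a *m E b + E b *m E a).
  rewrite /K /L !mulmx_suml.
  rewrite [X in _ + X](eq_bigr (fun b => \sum_a (x a * y b) *: (E b *m E a))); last first.
    move=> b _; rewrite mulmx_sumr; apply: eq_bigr => a _.
    by rewrite -scalemxAl -scalemxAr scalerA mulrC.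
  rewrite (exchange_big) /= -big_split /=; apply: eq_bigr => a _.
  rewrite mulmx_sumr -big_split /=; apply: eq_bigr => b _.
  by rewrite -scalemxAl -scalemxAr scalerA scalerDr.
rewrite HKL mulmx_suml tr_sum; apply: eq_bigr => a _.
rewrite mulmx_suml tr_sum; apply: eq_bigr => b _.
by rewrite -scalemxAl mxtraceZ.
Qed.

Variable N : 'M[R]_8.
Hypothesis HN : N \in unitmx.
Hypothesis hV : forall K, K \in <<Xs>>%VS -> N *m K *m invmx N \in <<Xs>>%VS.

Definition phi K := N *m K *m invmx N.

Lemma phiM A B : phi (A *m B) = phi A *m phi B.
Proof. by rewrite /phi !mulmxA mulmxKV. Qed.

Lemma phiD A B : phi (A + B) = phi A + phi B.
Proof. by rewrite /phi mulmxDr mulmxDl. Qed.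

Lemma phiZ a A : phi (a *: A) = a *: phi A.
Proof. by rewrite /phi -scalemxAr -scalemxAl. Qed.

Lemma phi1 : phi 1%:M = 1%:M.
Proof. by rewrite /phi mulmx1 mulmxV. Qed.

Lemma tr_phi A : \tr (phi A) = \tr A.
Proof. by rewrite /phi mxtrace_mulC mulmxA mulVmx // mul1mx. Qed.

Lemma antic_phi A B : antic (phi A) (phi B) = phi (antic A B).
Proof. by rewrite /antic phiD !phiM. Qed.

Definition Xt : 7.-tuple 'M[R]_8 := @Tuple 7 _ Xs isT.

Lemma E_in a : E a \in <<Xs>>%VS.
Proof. by apply: memv_span; apply: mem_nth. Qed.

Definition Q (k a : 'I_7) := coord Xt a (phi (E k)).

Lemma phiE k : phi (E k) = \sum_a Q k a *: E a.
Proof.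
have H : phi (E k) \in <<Xt>>%VS by exact: (hV _ (E_in k)).
exact: (coord_span H).
Qed.


Lemma orthQ k l : \sum_a Q k a * Q l a = (k == l)%:R.
Proof.
have H := @bilin 7 E (Q k) (Q l) 1%:M.
rewrite /= -!phiE !mulmx1 -/(antic _ _) antic_phi tr_phi tr_antic in H.
have H2 : \sum_a \sum_b Q k a * Q l b * \tr ((E a *m E b + E b *m E a) *m 1%:M)
        = -16 * \sum_a Q k a * Q l a.
  rewrite mulr_sumr; apply: eq_bigr => a _.
  rewrite -(sum_delta (fun b => -16 * (Q k a * Q l b)) a).
  apply: eq_bigr => b _; rewrite mulmx1 -/(antic _ _) tr_antic [a == b]eq_sym.
  ring.
rewrite H2 in H.
have : -16 * (\sum_a Q k a * Q l a - (k == l)%:R) = 0 by rewrite mulrBr -H subrr.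
by move/eqP; rewrite mulf_eq0 subr_eq0 => /orP[/eqP|/eqP] //; lra.
Qed.


Hypothesis s_neq0 : s != 0.

Lemma antiQ k l (j : 'I_7) : (j < 5)%N -> good k l ->
  Q k j * Q l o6 + Q k o6 * Q l j = 0.
Proof.
move=> Hj Hg.
have H := @bilin 7 E (Q k) (Q l) (F j).
rewrite /= -!phiE -/(antic (phi (E k)) (phi (E l))) antic_phi antic_good // phiZ phi1 in H.
rewrite -scalemxAl mul1mx mxtraceZ trF // mulr0 in H.
have H2 : \sum_a \sum_b Q k a * Q l b * \tr ((E a *m E b + E b *m E a) *m F j)
   = 16 * s * (Q k j * Q l o6 + Q k o6 * Q l j).
  rewrite mulrDr; have := sum_ind (fun a b => 16 * s * (Q k a * Q l b)) j Hj.
  rewrite /= => <-.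
  apply: eq_bigr => a _; apply: eq_bigr => b _.
  rewrite -/(antic _ _) tr_anticF //; ring.
rewrite H2 in H.
move/esym/eqP: H; rewrite !mulf_eq0 => /orP[/orP[]|/eqP //].
- by move/eqP; lra.
- by rewrite (negbTE s_neq0).
Qed.


Hypothesis c_neq0 : c != 0.

Definition lc a b := a *: J 7 + b *: Y.

Lemma lc_comb x y a b a' b' : x *: lc a b + y *: lc a' b' = lc (x * a + y * a') (x * b + y * b').
Proof. by rewrite /lc !scalerDr !scalerA addrACA -!scalerDl. Qed.

Lemma J6J' : J 6 *m J' = lc (- s) c.
Proof.
rewrite /J' /lc mulmxDr -!scalemxAr addrC; congr (_ + _).
by rewrite /Y mulmxA sqJ // mulNmx mul1mx scaleNr scalerN.
Qed.

Lemma J'lc : J' = lc c s.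
Proof. by []. Qed.

Lemma J7lc : J 7 = lc 1 0.
Proof. by rewrite /lc scale1r scale0r addr0. Qed.

Lemma J7_expr : J 7 = c *: J' + (- s) *: (J 6 *m J').
Proof.
rewrite J6J' J'lc lc_comb {1}J7lc; congr lc; last by ring.
rewrite -cs1; ring.
Qed.

Lemma phiN A : phi (- A) = - phi A.
Proof. by rewrite /phi mulmxN mulNmx. Qed.

Definition psi K := invmx N *m K *m N.

Lemma psi_phi K : psi (phi K) = K.
Proof.
by rewrite /psi /phi !mulmxA mulVmx // mul1mx -mulmxA mulVmx // mulmx1.
Qed.

Lemma psiZ a A : psi (a *: A) = a *: psi A.
Proof. by rewrite /psi -scalemxAr -scalemxAl. Qed.

Lemma psi_eig A e : e * e = 1 -> phi A = e *: A -> psi A = e *: A.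
Proof.
move=> He HA; have := psi_phi A; rewrite HA psiZ => H.
by rewrite -{2}H scalerA He scale1r.
Qed.

Lemma sq1 (x : R) : x * x = 1 -> x = 1 \/ x = -1.
Proof.
move=> H; have : (x - 1) * (x + 1) = 0 by rewrite mulrDr !mulrBl H; ring.
by move/eqP; rewrite mulf_eq0 => /orP[/eqP|/eqP] H'; [left|right]; lra.
Qed.

Lemma main_core : exists e7 : R, [/\ e7 = 1 \/ e7 = -1,
        invmx N *m J 6%N *m N = J 6%N,
        invmx N *m J 7%N *m N = e7 *: J 7%N
      & invmx N *m J' *m N = e7 *: J'].
Proof.
have HO := orthQ; have HA := antiQ.
set lam := Q o5 o5; set nu := Q o6 o6.
have Hlam : lam * lam = 1 := @step2 _ Q HO HA.
have Hnu : nu * nu = 1 := @step5 _ Q HO HA.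
have phi6 : phi (J 6) = lam *: J 6.
  have -> : J 6 = E o5 by [].
  by rewrite phiE (@sum_onlyV _ _ o5) // => a Ha; rewrite (@row5 _ Q HO HA a Ha) scale0r.
have phi' : phi J' = nu *: J'.
  have -> : J' = E o6 by [].
  by rewrite phiE (@sum_onlyV _ _ o6) // => a Ha; rewrite (@row6 _ Q HO HA a Ha) scale0r.
pose B := phi (J 1).
have HB : B = \sum_a Q o0 a *: E a by rewrite /B (phiE o0).
have Q05 : Q o0 o5 = 0 by apply: (@step3 _ Q HO HA).
have Q06 : Q o0 o6 = 0 by apply: (@step4 _ Q HO HA).
have BJ7 : antic B (J 7) = 0.
  rewrite HB /antic mulmx_suml mulmx_sumr -big_split big1 // => a _ /=.
  case: (ord7 a) => [Ha|[Ha|Ha]].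
  - rewrite -scalemxAl -scalemxAr -scalerDr E_lt6; last by lia.
    by rewrite -/(antic _ _) acJ0 ?scaler0 //; lia.
  - have -> : a = o5 by apply: val_inj.
    by rewrite Q05 !scale0r mul0mx mulmx0 addr0.
  - have -> : a = o6 by apply: val_inj.
    by rewrite Q06 !scale0r mul0mx mulmx0 addr0.
have BY : B *m Y = Y *m B.
  apply/eqP; rewrite -subr_eq0; apply/eqP.
  rewrite HB mulmx_suml mulmx_sumr -sumrB big1 // => a _ /=.
  case: (ord7 a) => [Ha|[Ha|Ha]].
  - rewrite -scalemxAl -scalemxAr -scalerBr E_lt6; last by lia.
    by rewrite YJ ?subrr ?scaler0 //; lia.
  - have -> : a = o5 by apply: val_inj.
    by rewrite Q05 !scale0r mul0mx mulmx0 subr0.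
  - have -> : a = o6 by apply: val_inj.
    by rewrite Q06 !scale0r mul0mx mulmx0 subr0.
have BB : B *m B = - 1%:M by rewrite /B -phiM sqJ // phiN phi1.
have phiJ7 : phi (J 7) = lc (c * nu * c + s * lam * nu * s) (c * nu * s - s * lam * nu * c).
  rewrite {1}J7_expr phiD !phiZ phiM phi6 phi' -scalemxAl -scalemxAr !scalerA.
  rewrite J6J' J'lc lc_comb; congr lc; ring.
have antiB : antic B (phi (J 7)) = 0.
  by rewrite /B antic_phi acJ0 // /phi mulmx0 mul0mx.
have lam1 : lam = 1.
  case: (@sq1 _ Hlam) => // Hl; exfalso.
  move: antiB; rewrite phiJ7 /lc anticDr !anticZr BJ7 scaler0 add0r /antic BY.
  set b := (c * nu * s - s * lam * nu * c).
  have Hb : b != 0.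
    rewrite /b Hl; have Hn := @sq1 _ Hnu.
    have cs0 : c * s != 0 by rewrite mulf_neq0.
    apply/negP => /eqP H; move: cs0; rewrite -[c * s]mulr1 -Hnu.
    have : c * s * nu * 2 = 0 by rewrite -H; ring.
    by move/eqP; rewrite !mulf_eq0 (negbTE c_neq0) (negbTE s_neq0) /= => /orP[/eqP ->|]; rewrite ?mulr0 ?mul0r ?eqxx //; lra.
  move/eqP; rewrite scaler_eq0 (negbTE Hb) /= => /eqP H.
  have YB0 : Y *m B = 0.
    have : (2:R) *: (Y *m B) = 0 by rewrite scaler_nat mulr2n.
    move/eqP; rewrite scaler_eq0 => /orP[/eqP H2|/eqP //]; exfalso; lra.
  have Y0 : Y = 0.
    have : Y *m B *m B = 0 by rewrite YB0 mul0mx.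
    by rewrite -mulmxA BB mulmxN mulmx1 => /eqP; rewrite oppr_eq0 => /eqP.
  have := Ysq; rewrite Y0 mul0mx => /(congr1 (fun M : 'M[R]_8 => M ord0 ord0)).
  rewrite !mxE /= mulr1n => /eqP; rewrite eq_sym oppr_eq0 oner_eq0 //.
have phi7 : phi (J 7) = nu *: J 7.
  rewrite phiJ7 lam1 J7lc /lc scale0r addr0 scalerA mulr1.
  have -> : c * nu * s - s * nu * c = 0 by ring.
  rewrite scale0r addr0; congr (_ *: _); rewrite -cs1; ring.
exists nu; split.
- exact: (@sq1 _ Hnu).
- rewrite -[RHS]scale1r; apply: (@psi_eig (J 6) 1); first by rewrite mulr1.
  by rewrite phi6 lam1.
- exact: (@psi_eig (J 7) nu Hnu phi7).
- exact: (@psi_eig J' nu Hnu phi').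
Qed.

End Core.

Theorem mainTheorem11 (R : realType) (J : nat -> 'M[R]_8) (theta : R) :
  (forall i, (1 <= i <= 7)%N -> ocs (J i)) ->
  (forall i j, (1 <= i <= 7)%N -> (1 <= j <= 7)%N -> i != j ->
      J i *m J j = - (J j *m J i)) ->
  0 < theta < pi / 2 ->
  let J' := cos theta *: J 7%N + sin theta *: (J 6%N *m J 7%N) in
  let V : {vspace 'M[R]_8} :=
    <<[seq J i | i <- iota 1 6] ++ [:: J']>>%VS in
  let W : {vspace 'M[R]_8} := <<[seq J i | i <- iota 1 5]>>%VS in
  (forall N : 'M[R]_8, orthogonal_mx N ->
     (forall K, K \in V -> N *m K *m invmx N \in V) ->
     exists e7 : R, [/\ e7 = 1 \/ e7 = -1,
        invmx N *m J 6%N *m N = J 6%N,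
        invmx N *m J 7%N *m N = e7 *: J 7%N
      & invmx N *m J' *m N = e7 *: J']) /\
  ~ (exists N : 'M[R]_8, [/\ orthogonal_mx N,
        (forall K, K \in V -> N *m K *m invmx N \in V)
      & invmx N *m J 6%N *m N = - J 6%N]) /\
  (forall ip : 'M[R]_8 -> 'M[R]_8 -> R,
     inner_product_on V ip ->
     standard_on W ip ->
     (forall i, (1 <= i <= 5)%N -> ip (J 6%N) (J i) = 0 /\ ip J' (J i) = 0) ->
     ~ WS_pair V ip).
Proof.
move=> Hocs Hanti Htheta J' V W.
have sqJ : forall i, (1 <= i <= 7)%N -> J i *m J i = - 1%:M.
  by move=> i Hi; case: (Hocs i Hi).
have cs1 : cos theta ^+ 2 + sin theta ^+ 2 = 1 by exact: cos2Dsin2.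
have pi0 : 0 < pi :> R by exact: pi_gt0.
have s0 : sin theta != 0.
  by rewrite gt_eqF // sin_gt0_pihalf.
have c0 : cos theta != 0.
  rewrite gt_eqF // cos_gt0_pihalf //; case/andP: Htheta => H1 H2.
  by apply/andP; split => //; lra.
have P1 : forall N : 'M[R]_8, orthogonal_mx N ->
     (forall K, K \in V -> N *m K *m invmx N \in V) ->
     exists e7 : R, [/\ e7 = 1 \/ e7 = -1,
        invmx N *m J 6%N *m N = J 6%N,
        invmx N *m J 7%N *m N = e7 *: J 7%N
      & invmx N *m J' *m N = e7 *: J'].
  move=> N HNo HNV.
  have HN : N \in unitmx by case: (mulmx1_unit HNo).
  exact: (@main_core R J (cos theta) (sin theta) sqJ Hanti cs1 N HN HNV s0 c0).
have P2 : ~ (exists N : 'M[R]_8, [/\ orthogonal_mx N,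
        (forall K, K \in V -> N *m K *m invmx N \in V)
      & invmx N *m J 6%N *m N = - J 6%N]).
  case=> N [HNo HNV H6].
  have [e7 [_ H6' _ _]] := P1 N HNo HNV.
  have : J 6 = - J 6 by rewrite -{1}H6' H6.
  move/eqP; rewrite -subr_eq0 opprK -mulr2n => /eqP H.
  have H0 : J 6 = 0.
    have : (2:R) *: J 6 = 0 by rewrite scaler_nat.
    by move/eqP; rewrite scaler_eq0 => /orP[/eqP H2|/eqP //]; exfalso; lra.
  have := sqJ 6 isT; rewrite H0 mul0mx => /(congr1 (fun M : 'M[R]_8 => M ord0 ord0)).
  by rewrite !mxE /= mulr1n => /eqP; rewrite eq_sym oppr_eq0 oner_eq0.
split => //; split => //.
move=> ip _ _ _ HWS.
have J6V : J 6 \in V by apply: memv_span; rewrite mem_cat; apply/orP; left; apply/mapP; exists 6%N.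
have [N [[HNo HNV _] _ HNJ]] := HWS (J 6) 0 J6V.
apply: P2; exists N; split => //.
have HN : N \in unitmx by case: (mulmx1_unit HNo).
have HJN : J 6 *m N = - (N *m J 6) by rewrite HNJ opprK.
by rewrite -mulmxA HJN mulmxN mulmxA mulVmx // mul1mx.
Qed.
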